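(* Consider the Task Scheduling Game defined in the context. Let $\mathbf{s}^*=(\mathbf{s}_1^*,\dots,\mathbf{s}_N^* )$ be any maximizer of $$\Phi(\mathbf{s}) = \sum_{k \in \mathcal{S}} \sum_{m=1}^{M_k(\mathbf{s})} \frac{V_k}{m} - \sum_{i \in \mathcal{N}} c_i^{\mathrm{ex}}(\mathbf{s}_i) - \sum_{i\in\mathcal{N}} c_i^{\mathrm{tr}}(\mathbf{s}_i)$$ over all strategy profiles $\mathbf{s}$ in which every $\mathbf{s}_i$ is feasible. Then $\mathbf{s}^*$ is a Nash equilibrium; in particular the game has at least one Nash equilibrium.
   Context: Task Scheduling Game. There is a finite set of users $\mathcal{N}=\{1,\dots,N\}$ and a finite set of tasks $\mathcal{S}=\{1,\dots,S\}$. Each task $k$ has a reward $V_k\in\mathbb{R}$, a target location $L_k$ (a point in the plane), and a valid time period $[T_k^{\dagger},T_k^{\ddagger}]$. Each user $i$ has an initial location $L_i$, a travelling speed $R_i>0$, a travelling cost per unit distance $\widetilde C_i\ge0$, a resource budget $C_i\ge 0$, and for each available task $k\in\mathcal{S}_i\subseteq\mathcal{S}$ an execution time $T_{i,k}\ge0$ and execution cost $C_{i,k}\ge 0$. A strategy of user $i$ is an ordered set $\mathbf{s}_i=\{k_i^1,\dots,k_i^{|\mathbf{s}_i|}\}$ of distinct tasks from $\mathcal{S}_i$. Let $D(a,b)=|L_a-L_b|$ denote the distance between locations, with $D(i,k)$ the distance from user $i$'s initial location to task $k$. The strategy $\mathbf{s}_i$ is feasible if (1) $\sum_{k\in\mathbf{s}_i}C_{i,k}\le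 C_i$, and (2) there exist times $T_i^1,\dots,T_i^{|\mathbf{s}_i|}$ with $T_{k_i^j}^{\dagger}\le T_i^j\le T_{k_i^j}^{\ddagger}$ for all $j$, $T_i^1\ge D(i,k_i^1)/R_i$, and $T_i^j\ge T_i^{j-1}+T_{i,k_i^{j-1}}+D(k_i^{j-1},k_i^j)/R_i$ for $j=2,\dots,|\mathbf{s}_i|$. For a profile $\mathbf{s}$, $M_k(\mathbf{s})=\sum_{i\in\mathcal{N}}\mathbf{1}_{(k\in\mathbf{s}_i)}$. Execution cost: $c_i^{\mathrm{ex}}(\mathbf{s}_i)=\sum_{k\in\mathbf{s}_i}C_{i,k}$; travelling cost: $c_i^{\mathrm{tr}}(\mathbf{s}_i)=\sum_{j=1}^{|\mathbf{s}_i|}D(k_i^{j-1},k_i^j)\widetilde C_i$, where $k_i^0$ denotes user $i$'s initial location. Payoff: $u_i(\mathbf{s}_i,\mathbf{s}_{-i})=\sum_{k\in\mathbf{s}_i}V_k/M_k(\mathbf{s})-c_i^{\mathrm{ex}}(\mathbf{s}_i)-c_i^{\mathrm{tr}}(\mathbf{s}_i)$. A profile $\mathbf{s}^*$ of feasible strategies is a Nash equilibrium if for every user $i$, $\mathbf{s}_i^*$ maximizes $u_i(\mathbf{s}_i,\mathbf{s}_{-i}^* )$ over all feasible strategies $\mathbf{s}_i$ of user $i$. *)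

(* Defs.v *)
From HB Require Import structures.
From mathcomp Require Import all_boot all_order all_algebra.
Set Implicit Arguments. Unset Strict Implicit. Unset Printing Implicit Defensive.
Import Order.TTheory GRing.Theory Num.Theory.
Local Open Scope ring_scope.

Definition point (R : rcfType) := (R * R)%type.

Definition dist (R : rcfType) (a b : point R) : R :=
  Num.sqrt ((a.1 - b.1) ^+ 2 + (a.2 - b.2) ^+ 2).

Record game (R : rcfType) (U T : finType) := Game {
  V : T -> R;
  Ltask : T -> point R;
  Tstart : T -> R;
  Tend : T -> R;
  Luser : U -> point R;
  speed : U -> R;
  ctrav : U -> R;
  budget : U -> R;
  avail : U -> {set T};
  texec : U -> T -> R;
  cexec : U -> T -> R
}.

Section Game.
Variables (R : rcfType) (U T : finType) (G : game R U T).

Definition strategy := seq T.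
Definition profile := U -> strategy.

(* location of k_i^{j}, for j = 0..|s|, where k_i^0 is L_i *)
Definition loc_at (i : U) (s : strategy) (j : nat) : point R :=
  nth (Luser G i) (Luser G i :: map (Ltask G) s) j.

(* j-th entry (0-based) of a sequence of reals; only used for j < size *)
Definition at0 (xs : seq R) (j : nat) : R := nth 0 xs j.

(* feasibility: distinct available tasks (s ⊆ S_i), budget (1), and
   existence of times T_i^1..T_i^|s| (stored 0-based as tm 0 .. tm (|s|-1)) (2) *)
Definition feasible (i : U) (s : strategy) : Prop :=
  [/\ uniq s, all (fun k => k \in avail G i) s,
      \sum_(k <- s) cexec G i k <= budget G i &
      exists tm : nat -> R,
        [/\ (forall j, (j < size s)%N ->
               at0 (map (Tstart G) s) j <= tm j <= at0 (map (Tend G) s) j),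
            (0 < size s)%N -> dist (Luser G i) (loc_at i s 1) / speed G i <= tm 0%N &
            (forall j, (0 < j)%N -> (j < size s)%N ->
               tm j.-1 + at0 (map (texec G i) s) j.-1
                 + dist (loc_at i s j) (loc_at i s j.+1) / speed G i <= tm j)]].

Definition Mk (s : profile) (k : T) : nat := #|[set j : U | k \in s j]|.

Definition cost_ex (i : U) (si : strategy) : R := \sum_(k <- si) cexec G i k.

Definition cost_tr (i : U) (si : strategy) : R :=
  \sum_(j < size si) dist (loc_at i si j) (loc_at i si j.+1) * ctrav G i.

Definition payoff (i : U) (s : profile) : R :=
  \sum_(k <- s i) V G k / (Mk s k)%:R - cost_ex i (s i) - cost_tr i (s i).

Definition upd (s : profile) (i : U) (si : strategy) : profile :=
  fun j => if j == i then si else s j.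

Definition feasible_profile (s : profile) : Prop := forall i, feasible i (s i).

Definition nash (s : profile) : Prop :=
  feasible_profile s /\
  forall i (si : strategy), feasible i si -> payoff i (upd s i si) <= payoff i s.

Definition potential (s : profile) : R :=
  \sum_(k : T) \sum_(1 <= m < (Mk s k).+1) V G k / m%:R
  - \sum_(i : U) cost_ex i (s i) - \sum_(i : U) cost_tr i (s i).

End Game.

(* Main.v *)
From Stdlib Require Import Classical FunctionalExtensionality.
Require Import Defs.
From mathcomp Require Import all_boot all_order all_algebra.
From mathcomp Require Import ring lra.
Import Order.TTheory GRing.Theory Num.Theory.
Local Open Scope ring_scope.

Section Aux.
Variables (R : rcfType) (U T : finType) (G : game R U T).

Definition Mo (s : profile U T) (i : U) (k : T) : nat :=
  #|[set j : U | (j != i) && (k \in s j)]|.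

Lemma Mk_split s i k : Mk s k = ((k \in s i) + Mo s i k)%N.
Proof.
rewrite /Mk (cardsD1 i) inE; congr (_ + _)%N.
by apply: eq_card => j; rewrite !inE.
Qed.

Lemma Mo_upd s i si k : Mo (upd s i si) i k = Mo s i k.
Proof.
apply: eq_card => j; rewrite !inE /upd.
by case: (j =P i).
Qed.

Lemma harm_split (v : R) a (b : bool) :
  \sum_(1 <= m < (b + a).+1) v / m%:R =
  \sum_(1 <= m < a.+1) v / m%:R + (if b then v / (a.+1)%:R else 0).
Proof.
case: b; last by rewrite add0n addr0.
by rewrite add1n big_nat_recr.
Qed.

Lemma pay_sum s i : uniq (s i) ->
  \sum_(k <- s i) V G k / (Mk s k)%:R =
  \sum_k (if k \in s i then V G k / (Mo s i k).+1%:R else 0).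
Proof.
move=> u; rewrite big_uniq // big_mkcond; apply: eq_bigr => k _.
by case: ifP => h //; rewrite (Mk_split s i) h add1n.
Qed.

Definition Q (s : profile U T) (i : U) : R :=
  \sum_k \sum_(1 <= m < (Mo s i k).+1) V G k / m%:R
  - \sum_(j | j != i) cost_ex G j (s j) - \sum_(j | j != i) cost_tr G j (s j).

Lemma pot_dec s i : uniq (s i) -> potential G s = Q s i + payoff G i s.
Proof.
move=> u; rewrite /potential /Q /payoff (bigD1 i (F := fun j => cost_ex G j (s j))) //=.
rewrite (bigD1 i (F := fun j => cost_tr G j (s j))) //= pay_sum //.
under eq_bigr => k _ do rewrite (Mk_split s i) harm_split.
rewrite big_split /=.
set A := \sum_k _; set B := \sum_k _.
set c1 := cost_ex _ _ _; set c2 := cost_tr _ _ _.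
set d1 := \sum_(j | _) _; set d2 := \sum_(j | _) _.
lra.
Qed.

Lemma Q_upd s i si : Q (upd s i si) i = Q s i.
Proof.
rewrite /Q; under eq_bigr => k _ do rewrite Mo_upd.
congr (_ - _ - _); apply: eq_bigr => j /negPf h; by rewrite /upd h.
Qed.

Lemma argmax_seq (X : eqType) (P : X -> Prop) (g : X -> R) (l : seq X) :
  (exists x0, x0 \in l /\ P x0) ->
  exists x, P x /\ forall y, y \in l -> P y -> g y <= g x.
Proof.
elim: l => [|a l IH]; first by case=> x [].
case=> x0 [hx0 Px0].
case: (classic (exists x1, x1 \in l /\ P x1)) => [ex|nex].
  have [x [Px Hx]] := IH ex.
  case: (classic (P a)) => Pa.
    have [h|h] := leP (g a) (g x).
      exists x; split=> // y; rewrite inE => /orP [/eqP -> //|]; exact: Hx.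
    exists a; split=> // y; rewrite inE => /orP [/eqP -> //|] yl Py.
    apply: le_trans (Hx y yl Py) _; exact: ltW.
  exists x; split=> // y; rewrite inE => /orP [/eqP -> //|]; exact: Hx.
have ea : x0 = a.
  move: hx0; rewrite inE => /orP [/eqP //|h]; exfalso; apply: nex; by exists x0.
subst x0; exists a; split=> // y; rewrite inE => /orP [/eqP -> //|yl Py].
exfalso; apply: nex; by exists y.
Qed.

Definition cands : seq (seq T) :=
  [seq take n p | p <- permutations (enum T), n <- iota 0 (#|T|).+1].

Lemma cands_mem (s : seq T) : uniq s -> s \in cands.
Proof.
move=> u.
pose p := s ++ [seq x <- enum T | x \notin s].
have -> : s = take (size s) p by rewrite /p take_size_cat.
apply: allpairs_f.
  rewrite mem_permutations; apply: uniq_perm.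
  - rewrite /p cat_uniq u filter_uniq ?enum_uniq //= andbT.
    apply/hasPn => x; rewrite mem_filter => /andP [] //.
  - exact: enum_uniq.
  - move=> x; rewrite /p mem_cat mem_filter mem_enum andbT.
    by case: (x \in s).
rewrite mem_iota add0n /= ltnS.
have := card_uniqP u => e; rewrite -e; exact: max_card.
Qed.

End Aux.

Theorem lemma3 (R : rcfType) (U T : finType) (G : game R U T)
  (speed_pos : forall i, 0 < speed G i)
  (ctrav_ge0 : forall i, 0 <= ctrav G i)
  (budget_ge0 : forall i, 0 <= budget G i)
  (texec_ge0 : forall i k, k \in avail G i -> 0 <= texec G i k)
  (cexec_ge0 : forall i k, k \in avail G i -> 0 <= cexec G i k) :
  (forall sstar : profile U T,
     feasible_profile G sstar ->
     (forall s : profile U T, feasible_profile G s ->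
        potential G s <= potential G sstar) ->
     nash G sstar)
  /\ (exists s : profile U T, nash G s).
Proof.
have part1 : forall sstar : profile U T,
     feasible_profile G sstar ->
     (forall s : profile U T, feasible_profile G s ->
        potential G s <= potential G sstar) ->
     nash G sstar.
  move=> ss fs mx; split=> // i si fsi.
  have fu : feasible_profile G (upd ss i si).
    by move=> j; rewrite /upd; case: (j =P i) => [->|].
  have := mx _ fu.
  have [u1 _ _ _] := fsi; have [u2 _ _ _] := fs i.
  have u1' : uniq (upd ss i si i) by rewrite /upd eqxx.
  rewrite (@pot_dec R U T G _ i u1') (@pot_dec R U T G _ i u2).
  by rewrite Q_upd lerD2l.
split=> //.
pose N := size (cands T).
pose prof (f : {ffun U -> 'I_N}) : profile U T := fun j => nth [::] (cands T) (f j).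
have repr : forall s : profile U T, feasible_profile G s ->
    exists f, f \in enum {ffun U -> 'I_N} /\ prof f = s.
  move=> s fs.
  have hi : forall j, (index (s j) (cands T) < N)%N.
    move=> j; rewrite index_mem; apply: cands_mem; by have [] := fs j.
  exists [ffun j => Ordinal (hi j)]; split; first by rewrite mem_enum.
  apply: functional_extensionality => j; by rewrite /prof ffunE /= nth_index // -index_mem.
have f0 : feasible_profile G (fun _ => [::]).
  move=> j; split=> //; first by rewrite big_nil.
  by exists (fun _ => 0); split => [jj|//|jj _] /=; rewrite ltn0.
have [f1 [h1 e1]] := repr _ f0.
have P1 : feasible_profile G (prof f1) by rewrite e1.
have [f [Pf Hf]] := @argmax_seq R _ (fun f => feasible_profile G (prof f))
   (fun f => potential G (prof f)) (enum {ffun U -> 'I_N})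
   (ex_intro _ f1 (conj h1 P1)).
exists (prof f); apply: part1 => // s fs.
have [g [hg e]] := repr s fs; subst s; exact: (Hf g hg fs).
Qed.
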